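(* Let $n\ge 1$, let $X:\mathbb{C}^n\to\mathbb{C}^n$ be a nilpotent linear operator, and fix $i$ with $1\le i\le n$. Suppose $h$ is a Hessenberg function with $h(i)=i$, and suppose that the function $h'$ defined by $h'(j)=h(j)$ for $j\neq i$ and $h'(i)=i-1$ is also a Hessenberg function. Then $\mathcal{H}(X,h)=\mathcal{H}(X,h')$.
   Context: A (full) flag in $\mathbb{C}^n$ is a chain $V_1\subseteq V_2\subseteq\cdots\subseteq V_n=\mathbb{C}^n$ with $\dim V_k=k$; the flag variety is $GL_n(\mathbb{C})/B$ where $B$ is the group of invertible upper-triangular matrices, and $[g]$ denotes the flag whose $k$-dimensional subspace is spanned by the first $k$ columns of $g$. A Hessenberg function is a nondecreasing function $h:\{1,\dots,n\}\to\{1,\dots,n\}$. Its Hessenberg space is $H_h=\operatorname{span}\{E_{kl}: k\le h(l)\}$, where $E_{kl}$ is the matrix unit with $1$ in entry $(k,l)$ and $0$ elsewhere. The Hessenberg variety of a linear operator $X$ and $h$ is $\mathcal{H}(X,h)=\{[g]: g^{-1}Xg\in H_h\}$, equivalently the set of flags with $XV_k\subseteq V_{h(k)}$ for all $k$. *)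

(* Defs.v *)
(* The complex numbers are modelled as R[i] = complex R
   for R : realType (a model of the real numbers). *)
From HB Require Import structures.
From mathcomp Require Import all_boot all_order all_algebra.
From mathcomp Require Import complex.
From mathcomp Require Import reals.
Set Implicit Arguments. Unset Strict Implicit. Unset Printing Implicit Defensive.
Import Order.TTheory GRing.Theory Num.Theory.
Local Open Scope ring_scope.

(* Hessenberg function on {1,...,n} (1-indexed; values outside 1..n irrelevant). *)
Definition hessenberg_fun (n : nat) (h : nat -> nat) : Prop :=
  (forall j, (1 <= j <= n)%N -> (1 <= h j <= n)%N) /\
  (forall j k, (1 <= j)%N -> (j <= k)%N -> (k <= n)%N -> (h j <= h k)%N).

(* Hessenberg space H_h = span{E_kl : k <= h(l)} (1-indexed), as a predicate:
   entry (k,l) (0-indexed k, l) vanishes unless k+1 <= h(l+1). *)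
Definition in_hess_space (F : fieldType) (n : nat) (h : nat -> nat) (M : 'M[F]_n) : Prop :=
  forall k l : 'I_n, ~~ (k.+1 <= h l.+1)%N -> M k l = 0.

(* The flag [g]: V_k = span of the first k columns of g, i.e. the row space
   of the first k rows of g^T; <<_>>%MS is the canonical representative of
   a subspace, so flags are compared by equality. *)
Definition flag_of (F : fieldType) (n : nat) (g : 'M[F]_n) : nat -> 'M[F]_n :=
  fun k => <<(\matrix_(i < n, j < n) (if (i < k)%N then g j i else 0))>>%MS.

Definition hess_variety (F : fieldType) (n : nat) (X : 'M[F]_n) (h : nat -> nat)
  (V : nat -> 'M[F]_n) : Prop :=
  exists g : 'M[F]_n, g \in unitmx /\ flag_of g = V /\
    in_hess_space h (invmx g *m X *m g).

Definition nilpotent_mx (F : fieldType) (n : nat) (X : 'M[F]_n) : Prop :=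
  exists k : nat, X ^+ k = 0.

(* Main.v *)
Require Import Defs.
From HB Require Import structures.
From mathcomp Require Import all_boot all_order all_algebra.
From mathcomp Require Import complex.
From mathcomp Require Import reals.
From mathcomp Require Import zify.
Import Order.TTheory GRing.Theory Num.Theory.
Local Open Scope ring_scope.

Lemma conj_pow (F : fieldType) n (g X : 'M[F]_n) k : g \in unitmx ->
  (invmx g *m X *m g) ^+ k = invmx g *m X ^+ k *m g.
Proof.
move=> gu; elim: k => [|k IH].
  by by rewrite !expr0 mulmx1 mulVmx.
rewrite exprSr IH -!mulmxE exprSr -!mulmxE !mulmxA; congr (_ *m _).
by rewrite -(mulmxA _ g) mulmxV // mulmx1.
Qed.

Lemma diag_nil (F : fieldType) n (M : 'M[F]_n) (p : 'I_n) k :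
  (forall r c : 'I_n, (c < p)%N -> (p <= r)%N -> M r c = 0) ->
  (forall r : 'I_n, (p < r)%N -> M r p = 0) ->
  (forall c : 'I_n, (c < p)%N -> (M ^+ k) p c = 0) /\ (M ^+ k) p p = M p p ^+ k.
Proof.
move=> Hb Ha; elim: k => [|k [IH1 IH2]].
  rewrite !expr0; split; last by rewrite mxE eqxx.
  by move=> c cp; rewrite mxE; case: eqP => // e; rewrite e ltnn in cp.
rewrite exprSr -mulmxE; split.
  move=> c cp; rewrite mxE big1 // => j _.
  case: (ltnP j p) => jp; first by rewrite IH1 // mul0r.
  by rewrite Hb // mulr0.
rewrite mxE (bigD1 p) //= big1 ?addr0 ?IH2 ?exprSr // => j jp.
case: (ltngtP j p) => c; first by rewrite IH1 // mul0r.
  by rewrite Ha // mulr0.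
by move/val_inj: c => c; rewrite c eqxx in jp.
Qed.

Theorem mainTheorem1 (R : realType) (n : nat) (X : 'M[R[i]]_n) (i : nat)
  (h h' : nat -> nat) :
  (1 <= n)%N ->
  nilpotent_mx X ->
  (1 <= i <= n)%N ->
  hessenberg_fun n h ->
  h i = i ->
  (forall j, j != i -> h' j = h j) ->
  h' i = i.-1 ->
  hessenberg_fun n h' ->
  forall V : nat -> 'M[R[i]]_n, hess_variety X h V <-> hess_variety X h' V.
Proof.
move=> n1 [K XK] /andP[i1 iN] [hr hm] hi h'h h'i [h'r h'm] V.
have le' : forall j, (h' j <= h j)%N.
  move=> j; case: (eqVneq j i) => [->|ji]; first by rewrite h'i hi leq_pred.
  by rewrite h'h.
split; last first.
  move=> [g [gu [fg Hg]]]; exists g; split => //; split => // k l kl.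
  apply: Hg; apply: contra kl => kl; exact: leq_trans kl (le' _).
move=> [g [gu [fg Hg]]]; exists g; split => //; split => //.
set M := invmx g *m X *m g in Hg *.
have ip : (i.-1 < n)%N by rewrite prednK.
pose p : 'I_n := Ordinal ip.
have Ha : forall r : 'I_n, (p < r)%N -> M r p = 0.
  move=> r rp; apply: Hg; rewrite -ltnNge /= prednK // hi.
  by move: rp; rewrite /= -ltnS prednK.
have Hb : forall r c : 'I_n, (c < p)%N -> (p <= r)%N -> M r c = 0.
  move=> r c cp pr; apply: Hg; rewrite -ltnNge.
  have i2 : (1 < i)%N by move: cp; rewrite /= ; case: (i) => // [[]].
  have ci : c.+1 != i by rewrite neq_ltn; apply/orP; left; rewrite /= in cp; rewrite -(prednK i1) ltnS.
  have c1 : (c.+1 <= i)%N by rewrite /= in cp; lia.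
  rewrite -h'h //; apply: (leq_ltn_trans (h'm _ i _ c1 iN)) => //.
  by rewrite h'i ltnS.
have [_ D] := diag_nil _ _ M p K Hb Ha.
have m0 : M p p = 0.
  have : M p p ^+ K == 0 by rewrite -D /M conj_pow // XK mulmx0 mul0mx mxE.
  by rewrite expf_eq0 => /andP[_ /eqP].
move=> k l kl; case: (eqVneq l.+1 i) => li.
  move: kl; rewrite li h'i -ltnNge => kl.
  case: (leqP k.+1 i) => ki; last by apply: Hg; rewrite li hi -ltnNge.
  have -> : k = p by apply: val_inj => /=; lia.
  have -> : l = p by apply: val_inj => /=; lia.
  exact: m0.
apply: Hg; by rewrite -h'h.
Qed.
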